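(* For every $h\in R$, the binary representation of $h$ does not contain $11$ as a contiguous substring.
   Context: Stern's sequence $(a(n))_{n\ge0}$: $a(0)=0$, $a(1)=1$, $a(2n)=a(n)$, $a(2n+1)=a(n)+a(n+1)$; $s(n)=a(n+1)$ for $n\ge0$. $R$ is the set of record-setters of $s$, i.e. indices $v\ge0$ with $s(i)<s(v)$ for all $i<v$. The binary representation of a positive integer has no leading zeros; $0$ is represented by the string $0$. *)

(* Defs.v *)
From mathcomp Require Import all_boot.
Set Implicit Arguments. Unset Strict Implicit. Unset Printing Implicit Defensive.

(* Stern's diatomic sequence a(n), computed with fuel (fuel n.+1 suffices). *)
Fixpoint stern_fuel (fuel n : nat) : nat :=
  match fuel with
  | 0 => 0
  | f.+1 =>
    if n is 0 then 0 else if n == 1 then 1 else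
    if ~~ odd n then stern_fuel f n./2
    else stern_fuel f n./2 + stern_fuel f (n./2).+1
  end.

Definition stern (n : nat) : nat := stern_fuel n.+1 n.

Definition s (n : nat) : nat := stern n.+1.

Definition record_setter (v : nat) : Prop := forall i, i < v -> s i < s v.

Fixpoint bits_lsb (fuel n : nat) : seq bool :=
  match fuel with
  | 0 => [::]
  | f.+1 => if n is 0 then [::] else odd n :: bits_lsb f n./2
  end.

Definition binrep (n : nat) : seq bool :=
  if n == 0 then [:: false] else rev (bits_lsb n n).

Example stern_check : map stern (iota 0 10) = [:: 0; 1; 1; 2; 1; 3; 2; 3; 1; 4].
Proof. by []. Qed.
Example binrep_check : binrep 6 = [:: true; true; false] /\ binrep 0 = [:: false]
  /\ binrep 1 = [:: true] /\ binrep 8 = [:: true; false; false; false].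
Proof. by []. Qed.

(* Main.v *)
Require Import Defs.
From mathcomp Require Import all_boot.
From mathcomp Require Import zify.

Lemma stern_fuel_S f n : stern_fuel f.+1 n =
  if n is 0 then 0 else if n == 1 then 1 else
  if ~~ odd n then stern_fuel f n./2
  else stern_fuel f n./2 + stern_fuel f (n./2).+1.
Proof. by []. Qed.

Lemma half_lt n : 0 < n -> n./2 < n.
Proof. move=> H; have := odd_double_half n; rewrite -muln2; case: (odd n) => /=; lia. Qed.

Lemma stern_fuel_ext f1 : forall f2 n, n < f1 -> n < f2 ->
  stern_fuel f1 n = stern_fuel f2 n.
Proof.
elim: f1 => [//|f IH] [//|g] n H1 H2.
rewrite !stern_fuel_S.
case: n H1 H2 => [//|[//|n]] H1 H2.
have e := odd_double_half n.+2.
case Ho: (odd n.+2) e => /= e.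
- rewrite -muln2 in e.
  rewrite (IH g) ?(IH g (n.+2)./2.+1) //; lia.
- rewrite -muln2 in e. rewrite (IH g) //; lia.
Qed.

Lemma stern_fuel_S2 f n : stern_fuel f.+1 n.+2 =
  if ~~ odd n.+2 then stern_fuel f (n.+2)./2
  else stern_fuel f (n.+2)./2 + stern_fuel f ((n.+2)./2).+1.
Proof. by []. Qed.

Lemma sD n : stern (2 * n) = stern n.
Proof.
case: n => [//|n].
have -> : 2 * n.+1 = (2 * n).+2 by lia.
rewrite /stern stern_fuel_S2.
have -> : odd (2 * n).+2 = false by rewrite /= negbK oddM.
have Hh : ((2 * n).+2)./2 = n.+1 by rewrite mulnC muln2 /= doubleK.
rewrite Hh; change (stern_fuel (2*n).+2 n.+1 = stern_fuel n.+2 n.+1); apply: stern_fuel_ext; lia.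
Qed.

Lemma sO n : stern (2 * n + 1) = stern n + stern (n + 1).
Proof.
case: n => [//|n].
have -> : 2 * n.+1 + 1 = (2 * n + 1).+2 by lia.
rewrite /stern stern_fuel_S2.
have -> : odd (2 * n + 1).+2 = true by rewrite /= negbK oddD oddM.
have Hh : ((2 * n + 1).+2)./2 = n.+1.
  by rewrite addn1 mulnC muln2 /= uphalf_double.
rewrite Hh.
change (stern_fuel (2 * n + 1).+2 n.+1 + stern_fuel (2 * n + 1).+2 n.+2 =
  stern_fuel n.+2 n.+1 + stern_fuel (n.+1 + 1).+1 (n.+1 + 1)).
rewrite addn1 (stern_fuel_ext _ n.+2 n.+1) ?(stern_fuel_ext _ n.+3 n.+2) //; try lia. by rewrite addn1.
Qed.

Lemma key k : forall n j, j <= 2 ^ k ->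
  stern (2 ^ k * n + j) = stern (2 ^ k - j) * stern n + stern j * stern n.+1.
Proof.
elim: k => [|k IH] n j Hj.
  rewrite expn0 in Hj *; case: j Hj => [|[|//]] _.
    by rewrite mul1n addn0 subn0 (_ : stern 1 = 1) // (_ : stern 0 = 0) // mul1n mul0n addn0.
  by rewrite mul1n addn1 subnn (_ : stern 1 = 1) // (_ : stern 0 = 0) // mul0n mul1n.
have e := odd_double_half j. rewrite -muln2 in e.
set P := 2 ^ k in IH.
have HP : 2 ^ k.+1 = 2 * P by rewrite expnS.
rewrite HP in Hj *.
case Ho: (odd j) e => /= e.
- set j' := j./2 in e.
  have -> : 2 * P * n + j = 2 * (P * n + j') + 1 by lia.
  have -> : 2 * P - j = 2 * (P - j' - 1) + 1 by lia.
  have -> : j = 2 * j' + 1 by lia.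
  rewrite !sO IH; last lia.
  have -> : P * n + j' + 1 = P * n + (j' + 1) by lia.
  rewrite IH; last lia.
  have -> : P - j' - 1 + 1 = P - j' by lia.
  have -> : P - (j' + 1) = P - j' - 1 by lia.
  nia.
- set j' := j./2 in e.
  have -> : 2 * P * n + j = 2 * (P * n + j') by lia.
  have -> : 2 * P - j = 2 * (P - j') by lia.
  have -> : j = 2 * j' by lia.
  rewrite !sD IH //; lia.
Qed.

Lemma prefix_case b l : prefix [:: true; true] (b :: l) ->
  b = true /\ exists l', l = true :: l'.
Proof. by case: b; case: l => [|[] l] //= _; split => //; exists l. Qed.

Lemma bits_head f n b l : bits_lsb f n = b :: l -> 0 < n /\ b = odd n /\ l = bits_lsb f.-1 n./2.
Proof. by case: f => [//|f]; case: n => [//|n] /= [<- <-]. Qed.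

Lemma bits_decomp f : forall n, infix [:: true; true] (bits_lsb f n) ->
  exists q k t, t < 2 ^ k /\ n = (4 * q + 3) * 2 ^ k + t.
Proof.
elim: f => [//|f IH] n.
case En: (bits_lsb f.+1 n) => [//|b l].
have [Hn [Hb Hl]] := bits_head _ _ _ _ En. rewrite /= in Hl.
rewrite infix_consl => /orP [Hp | Hi].
- have [Hb1 [l' Hl']] := prefix_case _ _ Hp.
  rewrite Hl in Hl'.
  have [Hn2 [Hb2 _]] := bits_head _ _ _ _ Hl'.
  have e1 := odd_double_half n. have e2 := odd_double_half n./2.
  rewrite -Hb Hb1 in e1; rewrite -Hb2 in e2. rewrite -muln2 in e1 e2.
  exists (n./2)./2, 0, 0. rewrite expn0 /=. simpl in e1, e2. lia.
- rewrite Hl in Hi.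
  have [q [k [t [Ht Hn']]]] := IH _ Hi.
  exists q, k.+1, (2 * t + odd n).
  have e1 := odd_double_half n. rewrite -muln2 in e1.
  rewrite expnS. case: (odd n) e1 => /= e1; split; lia.
Qed.

Theorem mainTheorem6 (h : nat) :
  record_setter h -> ~~ infix [:: true; true] (binrep h).
Proof.
move=> Hr; apply/negP => Hin.
have [q [k [t [Ht Hh]]]] : exists q k t, t < 2 ^ k /\ h = (4 * q + 3) * 2 ^ k + t.
  move: Hin; rewrite /binrep; case: (h == 0) => //.
  rewrite -infix_revLR /=. exact: bits_decomp.
have e := odd_double_half h. rewrite -muln2 in e.
case Ho: (odd h) e => /= e.
-
  set m := h./2 in e.
  have Hm : m < h by lia.
  have := Hr m Hm. rewrite /s.
  have -> : h.+1 = 2 * (m + 1) by lia.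
  rewrite sD addn1. by rewrite ltnn.
- case: k Ht Hh => [|k] Ht Hh.
    rewrite expn0 in Ht Hh; lia.
  set P := 2 ^ k.+1 in Ht Hh.
  have HP : 2 ^ k.+2 = 2 * P by rewrite expnS.
  have HP1 : 0 < P by rewrite expn_gt0.
  set p := 2 * q + 1.
  set j := P + t + 1.
  set j' := P - t - 1.
  have Ht' : t + 1 < P.
    have hP : ~~ odd P by rewrite /P expnS oddM.
    have ht : ~~ odd t.
      move: Ho; rewrite Hh oddD oddM (negbTE hP) andbF /=.
      by case: (odd t).
    have : t + 1 != P by apply/eqP => E; move: hP; rewrite -E addn1 /= ht.
    lia.
  have Eh : h.+1 = 2 ^ k.+2 * p + j by rewrite HP; lia.
  set n' := 2 ^ k.+2 * p + j'.
  have Hi : n'.-1 < h by rewrite /n' HP; lia.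
  have := Hr _ Hi. rewrite /s.
  have -> : n'.-1.+1 = n' by rewrite /n' HP; lia.
  rewrite Eh /n' !key; try (rewrite HP; lia).
  have -> : 2 ^ k.+2 - j = j' by rewrite HP; lia.
  have -> : 2 ^ k.+2 - j' = j by rewrite HP; lia.
  have HA : stern j = stern j' + stern (t + 1).
    have := key k.+1 1 (t + 1). rewrite -/P muln1 (_ : stern 1 = 1) // (_ : stern 2 = 1) // !muln1 => H.
    rewrite /j /j' -addnA H; last lia. congr (stern _ + _); lia.
  have HX : stern p = stern q + stern p.+1.
    rewrite /p sO. have -> : (2 * q + 1).+1 = 2 * (q + 1) by lia. by rewrite sD.
  rewrite HA HX. nia.
Qed.
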